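(* Let $(X,\mathrm{dist})$ be a metric space, $\Sigma$ a metric space, $\{U_\sigma(t,\tau)\}_{\sigma\in\Sigma}$ a family of processes on $X$, and $\Sigma_0\subset\Sigma$ a dense subset. Suppose that for every bounded set $C\subset X$ there exists $t_C\ge0$ such that the map $\sigma\mapsto U_\sigma(t,\tau)x$ from $\Sigma$ to $X$ is continuous for every fixed $x\in C$ and all $t,\tau$ with $t-\tau\ge t_C$. Then every set $K\subset X$ that is uniformly attracting for the subfamily $\{U_\sigma(t,\tau)\}_{\sigma\in\Sigma_0}$ is uniformly attracting for the whole family $\{U_\sigma(t,\tau)\}_{\sigma\in\Sigma}$.
   Context: A process on $X$ is a family of maps $U(t,\tau):X\to X$, indexed by reals $t\ge\tau$, with $U(\tau,\tau)=\mathrm{id}_X$ and $U(t,\tau)=U(t,s)U(s,\tau)$ for $t\ge s\ge\tau$. For nonempty $B,C\subset X$, $\delta_X(B,C)=\sup_{x\in B}\inf_{\xi\in C}\mathrm{dist}(x,\xi)$. For a family $\{U_\sigma(t,\tau)\}_{\sigma\in\Lambda}$, a set $K\subset X$ is uniformly attracting if for every bounded $C\subset X$, $\lim_{t-\tau\to\infty}\sup_{\sigma\in\Lambda}\delta_X(U_\sigma(t,\tau)C,K)=0$. *)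

(* Defs.v *)
From HB Require Import structures.
From mathcomp Require Import all_boot all_order all_algebra.
From mathcomp Require Import all_classical all_reals all_analysis.
Set Implicit Arguments. Unset Strict Implicit. Unset Printing Implicit Defensive.
Import Order.TTheory GRing.Theory Num.Theory.
Local Open Scope classical_set_scope.
Local Open Scope ring_scope.

Section defs.
Context {R : realType}.

Definition is_process {X : Type} (U : R -> R -> X -> X) : Prop :=
  (forall tau x, U tau tau x = x) /\
  (forall t s tau x, s <= t -> tau <= s -> U t tau x = U t s (U s tau x)).

Definition mbounded {X : metricType R} (C : set X) : Prop :=
  exists (x0 : X) (r : R), forall y, C y -> mdist x0 y <= r.

Definition hdelta {X : metricType R} (B C : set X) : \bar R :=
  ereal_sup [set ereal_inf [set (mdist x xi)%:E | xi in C] | x in B].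

Definition unif_attracting {X Sig : metricType R}
  (U : Sig -> R -> R -> X -> X) (Lam : set Sig) (K : set X) : Prop :=
  forall C : set X, mbounded C ->
  forall eps : R, 0 < eps -> exists T : R, forall t tau : R,
    tau <= t -> T <= t - tau ->
    (ereal_sup [set hdelta (U s t tau @` C) K | s in Lam] <= eps%:E)%E.

End defs.

(* Main.v *)
Require Import Defs.
From HB Require Import structures.
From mathcomp Require Import all_boot all_order all_algebra.
From mathcomp Require Import all_classical all_reals all_analysis.
Import Order.TTheory GRing.Theory Num.Theory.
Local Open Scope classical_set_scope.
Local Open Scope ring_scope.

Theorem proposition3p10 (R : realType) (X Sig : metricType R)
  (U : Sig -> R -> R -> X -> X) (Sig0 : set Sig) :
  (forall s : Sig, is_process (U s)) ->
  dense Sig0 ->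
  (forall C : set X, mbounded C ->
     exists tC : R, 0 <= tC /\
       forall x : X, C x -> forall t tau : R, tau <= t -> tC <= t - tau ->
         continuous (fun s : Sig => U s t tau x)) ->
  forall K : set X, unif_attracting U Sig0 K -> unif_attracting U setT K.
Proof.
move=> _ dS Hc K HA C Cb eps eps0.
have [tC [tC0 cont]] := Hc C Cb.
have e3 : 0 < eps / 3 by rewrite divr_gt0.
have e2 : 0 < eps / 2 by rewrite divr_gt0.
have [T HT] := HA C Cb (eps / 3) e3.
exists (Num.max T tC) => t tau lett Tle.
have /andP[TTle HtC] : (T <= t - tau) && (tC <= t - tau) by rewrite -ge_max.
have HT' := HT t tau lett TTle.
apply: ge_ereal_sup => _ [s _ <-].
apply: ge_ereal_sup => _ [y [x Cx <-] <-].
have cx := cont x Cx t tau lett HtC s.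
have nb : nbhs (U s t tau x) (ball (U s t tau x) (eps / 2)) by apply: nbhsx_ballx.
have := cx _ nb => /= Pn.
have [s' [Is' S0s']] : (interior ((fun s : Sig => U s t tau x) @^-1` ball (U s t tau x) (eps / 2))) `&` Sig0 !=set0.
  apply: dS; first by exists s.
  exact: open_interior.
have Bs' := nbhs_singleton Is'.
have Hs' : (hdelta (U s' t tau @` C) K <= (eps / 3)%:E)%E.
  apply: (le_trans _ HT'); apply: ereal_sup_ubound; by exists s'.
have Hinf : (ereal_inf [set (mdist (U s' t tau x) xi)%:E | xi in K] < (eps / 2)%:E)%E.
  apply: (@le_lt_trans _ _ (eps / 3)%:E); last first.
    by rewrite lte_fin ltr_pM2l // ltf_pV2 ?posrE // ltr_nat.
  apply: (le_trans _ Hs'); apply: ereal_sup_ubound; exists (U s' t tau x) => //.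
have [_ [xi Kxi <-] dlt] := ereal_inf_lt Hinf.
rewrite lte_fin in dlt.
have b2 : ball (U s' t tau x) (eps / 2) xi by rewrite ballEmdist.
have := ball_triangle Bs' b2; rewrite -splitr ballEmdist /= => dd.
apply: (@le_trans _ _ (mdist (U s t tau x) xi)%:E).
  apply: ereal_inf_lbound. exists xi => //.
rewrite lee_fin. exact: ltW.
Qed.
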